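(* Let $a>0$, $\alpha\in[0,1)$ and $f\in\mathcal C_a$. Then $\mathrm{Sh}_\alpha(\mathrm{gr}(f))=\mathrm{gr}(\mathrm{Sh}_\alpha(f))$.
   Context: $\mathcal C_a$ is the set of $C^1$ functions $f:\mathbb R\to\mathbb R$ that are even, satisfy $f(s)=|s|$ for $|s|\ge a$ and are strictly convex on $[-a,a]$. Shaking of functions: for $f\in\mathcal C_a$ and $\alpha\in[0,1)$, put $F_\alpha(s)=f(s)-\alpha s$, $x_\alpha^+=(f')^{-1}(\alpha)\in[0,a)$ (inverse of $f':[-a,a]\to[-1,1]$); $F_\alpha$ decreases on $(-\infty,x_\alpha^+]$ and increases on $[x_\alpha^+,\infty)$. Let $F_\alpha^{-1}$ be the inverse of $F_\alpha|_{[x_\alpha^+,\infty)}$, $\phi=F_\alpha^{-1}\circ F_\alpha$, $\delta_x=(1-\alpha)^{-1}F_\alpha(x)-\phi(x)$, $s_\alpha=x_\alpha^++\delta_{x_\alpha^+}$; $x\mapsto x+\delta_x$ is an increasing bijection $(-\infty,x_\alpha^+]\to(-\infty,s_\alpha]$ with inverse $\tau$. Define $\mathrm{Sh}_\alpha(f)(x)=\alpha x+F_\alpha(\tau(x))$ for $x\le s_\alpha$ and $=x$ for $x>s_\alpha$. Graphs: let $\mathcal P$ be the set of continuous $g:\mathbb R\to\mathbb R$ with $g(x)\ge|x|$ for all $x$, $g(x)=|x|$ for $|x|$ large, and $g(x_0)\ne|x_0|$ for some $x_0$. For $g\in\mathcal P$ let $a_g=\inf\{x:g(x)\ne|x|\}$,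 $b_g=\sup\{x:g(x)\ne|x|\}$ and $\mathrm{gr}(g)=\{(x,y)\in[a_g,b_g]\times\mathbb R_{\ge0}:|x|\le y\le g(x)\}$ (both $f$ and $\mathrm{Sh}_\alpha(f)$ lie in $\mathcal P$). Shaking of sets: let $D$ be the line $y=-x$ and $v_\alpha$ the unit vector positively collinear to $(1,\alpha)$. For compact $K\subseteq\mathbb R^2$, $\mathrm{Sh}_\alpha(K)=\bigcup_{p\in D}K^p$, where $K^p=\emptyset$ if $K\cap(p+\mathbb Rv_\alpha)=\emptyset$ and otherwise $K^p$ is the segment from $p$ to $p+|K\cap(p+\mathbb Rv_\alpha)|\,v_\alpha$, $|\cdot|$ denoting one-dimensional Lebesgue measure on the line. *)

(* Defs.v *)
From HB Require Import structures.
From mathcomp Require Import all_boot all_order all_algebra.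
From mathcomp Require Import all_classical all_reals all_analysis.
Set Implicit Arguments. Unset Strict Implicit. Unset Printing Implicit Defensive.
Import Order.TTheory GRing.Theory Num.Theory.
Import numFieldNormedType.Exports.
Local Open Scope classical_set_scope.
Local Open Scope ring_scope.

Section Shaking.
Variable R : realType.

Definition in_Ca (a : R) (f : R -> R) : Prop :=
  (forall x, derivable f x 1) /\ continuous (derive1 f) /\
  (forall s, f (- s) = f s) /\
  (forall s, a <= `|s| -> f s = `|s|) /\
  (forall x y t, - a <= x -> x < y -> y <= a -> 0 < t -> t < 1 ->
     f (t * x + (1 - t) * y) < t * f x + (1 - t) * f y).

Definition Fa (alpha : R) (f : R -> R) (s : R) : R := f s - alpha * s.

(* x_alpha^+ = (f')^{-1}(alpha), inverse of f' : [-a,a] -> [-1,1] *)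
Definition xplus (a alpha : R) (f : R -> R) : R :=
  xget 0 [set x | - a <= x <= a /\ derive1 f x = alpha].

Definition Finv (a alpha : R) (f : R -> R) (y : R) : R :=
  xget 0 [set x | xplus a alpha f <= x /\ Fa alpha f x = y].

Definition phi (a alpha : R) (f : R -> R) (x : R) : R :=
  Finv a alpha f (Fa alpha f x).

Definition delta (a alpha : R) (f : R -> R) (x : R) : R :=
  (1 - alpha)^-1 * Fa alpha f x - phi a alpha f x.

Definition salpha (a alpha : R) (f : R -> R) : R :=
  xplus a alpha f + delta a alpha f (xplus a alpha f).

(* tau : inverse of x |-> x + delta_x, (-oo, x^+] -> (-oo, s_alpha] *)
Definition tau (a alpha : R) (f : R -> R) (y : R) : R :=
  xget 0 [set x | x <= xplus a alpha f /\ x + delta a alpha f x = y].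

Definition Sh_fun (a alpha : R) (f : R -> R) (x : R) : R :=
  if x <= salpha a alpha f then alpha * x + Fa alpha f (tau a alpha f x)
  else x.

Definition a_g (g : R -> R) : R := inf [set x | g x <> `|x|].
Definition b_g (g : R -> R) : R := sup [set x | g x <> `|x|].

Definition gr (g : R -> R) : set (R * R) :=
  [set p | a_g g <= p.1 <= b_g g /\ 0 <= p.2 /\ `|p.1| <= p.2 <= g p.1].

Definition v_alpha (alpha : R) : R * R :=
  ((Num.sqrt (1 + alpha ^+ 2))^-1, alpha / Num.sqrt (1 + alpha ^+ 2)).

Definition D_line : set (R * R) := [set p | p.2 = - p.1].

Definition pt_line (p v : R * R) (s : R) : R * R := (p.1 + s * v.1, p.2 + s * v.2).

(* one-dimensional Lebesgue measure of K ∩ (p + R v), via the isometric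
   (v is a unit vector) parametrisation s |-> p + s v of the line *)
Definition line_measure (K : set (R * R)) (p v : R * R) : R :=
  fine (@lebesgue_measure R [set s : R | K (pt_line p v s)]).

Definition Kp (alpha : R) (K : set (R * R)) (p : R * R) : set (R * R) :=
  let v := v_alpha alpha in
  if `[< exists s, K (pt_line p v s) >] then
    [set q | exists2 s, 0 <= s <= line_measure K p v & q = pt_line p v s]
  else set0.

Definition Sh_set (alpha : R) (K : set (R * R)) : set (R * R) :=
  \bigcup_(p in D_line) Kp alpha K p.

End Shaking.

(* Main.v *)
Require Import Defs.
From HB Require Import structures.
From mathcomp Require Import all_boot all_order all_algebra.
From mathcomp Require Import all_classical all_reals all_analysis.
From mathcomp Require Import ring lra.
Import Order.TTheory GRing.Theory Num.Theory.
Import numFieldNormedType.Exports.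
Local Open Scope classical_set_scope.
Local Open Scope ring_scope.
Section S.
Variable R : realType.
Variables (a al : R) (f : R -> R).
Hypothesis a0 : 0 < a.
Hypothesis al0 : 0 <= al.
Hypothesis al1 : al < 1.
Hypothesis fd : forall x, derivable f x 1.
Hypothesis fdc : continuous (derive1 f).
Hypothesis fev : forall s, f (- s) = f s.
Hypothesis fout : forall s, a <= `|s| -> f s = `|s|.
Hypothesis fcvx : forall x y t, - a <= x -> x < y -> y <= a -> 0 < t -> t < 1 ->
     f (t * x + (1 - t) * y) < t * f x + (1 - t) * f y.

Ltac lr0 := have := a0; have := al0; have := al1; lra.
Ltac lr := match goal with |- is_true (_ && _) => apply/andP; split; lr | _ => lr0 end.
Ltac nr := have := a0; have := al0; have := al1; nra.

Lemma cvx x y t : -a <= x <= a -> -a <= y <= a -> 0 <= t <= 1 ->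
  f (t * x + (1 - t) * y) <= t * f x + (1 - t) * f y.
Proof.
move=> /andP[x1 x2] /andP[y1 y2] /andP[t0 t1].
have [->|tn0] := eqVneq t 0; first by rewrite !mul0r !add0r subr0 !mul1r.
have [->|tn1] := eqVneq t 1; first by rewrite subrr !mul0r !addr0 !mul1r.
have t0' : 0 < t by rewrite lt_neqAle eq_sym tn0.
have t1' : t < 1 by rewrite lt_neqAle tn1.
have [xy|yx|<-] := ltgtP x y.
- exact/ltW/fcvx.
- have e1 : 1 - (1 - t) = t by lr.
  have := @fcvx y x (1 - t) y1 yx x2; rewrite e1 => /(_ ltac:(lr) ltac:(lr))/ltW.
  by rewrite addrC (addrC (_ * f y)).
- by rewrite -mulrDl subrKC !mul1r -mulrDl subrKC mul1r.
Qed.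

Let Q x0 h := h^-1 * (f (h + x0) - f x0).

Lemma der_le x0 K e : 0 < e -> (forall h, 0 < h -> h < e -> f (h + x0) - f x0 <= K * h) ->
  derive1 f x0 <= K.
Proof.
move=> e0 H0.
have H : forall h, 0 < h -> h < e -> Q x0 h <= K.
  move=> h h0 he; rewrite /Q mulrC ler_pdivrMr //; exact: H0.
 rewrite derive1E /derive (cvg_at_rightE _ _ (fd x0)).
apply: limr_le; first by apply/cvg_ex; eexists; exact: cvg_dnbhs_at_right (fd x0).
near=> h; have -> : h *: (1:R) = h by rewrite -[h *: _]/(h * 1) mulr1.
  apply: H.
  by near: h; exact: nbhs_right_gt.
by near: h; exact: nbhs_right_lt.
Unshelve. all: by end_near. Qed.

Lemma der_ge x0 K e : 0 < e -> (forall h, - e < h -> h < 0 -> f (h + x0) - f x0 <= K * h) ->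
  K <= derive1 f x0.
Proof.
move=> e0 H0.
have H : forall h, - e < h -> h < 0 -> K <= Q x0 h.
  move=> h h0 he; rewrite /Q mulrC ler_ndivlMr //; exact: H0.
 rewrite derive1E /derive (cvg_at_leftE _ _ (fd x0)).
apply: limr_ge; first by apply/cvg_ex; eexists; exact: cvg_dnbhs_at_left (fd x0).
near=> h; have -> : h *: (1:R) = h by rewrite -[h *: _]/(h * 1) mulr1.
  apply: H.
  by near: h; apply: nbhs_left_gt; rewrite ltrNl oppr0.
by near: h; exact: nbhs_left_lt.
Unshelve. all: by end_near. Qed.

Lemma tangent x0 y : -a <= x0 <= a -> -a <= y <= a -> y != x0 ->
  f x0 + derive1 f x0 * (y - x0) < f y.
Proof.
move=> hx0 hy yx0.
set d := y - x0; set m := x0 + d / 2.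
have dn0 : d != 0 by rewrite subr_eq0.
have hm : -a <= m <= a by rewrite /m /d; lr.
have mid : f m < (f x0 + f y) / 2.
  have [lt|gt|eq] := ltgtP x0 y; last 1 first.
  - by move: yx0; rewrite eq eqxx.
  - have := @fcvx x0 y (1/2) ltac:(lr) lt ltac:(lr) ltac:(lr) ltac:(lr).
    have -> : 1 / 2 * x0 + (1 - 1 / 2) * y = m by rewrite /m /d; field.
    lr.
  - have := @fcvx y x0 (1/2) ltac:(lr) gt ltac:(lr) ltac:(lr) ltac:(lr).
    have -> : 1 / 2 * y + (1 - 1 / 2) * x0 = m by rewrite /m /d; field.
    lr.
set K := 2 * (f m - f x0) / d.
have key : forall h, 0 < h / d < 1 / 2 -> f (h + x0) - f x0 <= K * h.
  move=> h hh; set t := 1 - 2 * (h / d).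
  have ht : 0 <= t <= 1 by rewrite /t; lr.
  have := @cvx _ _ _ hx0 hm ht.
  have -> : t * x0 + (1 - t) * m = h + x0 by rewrite /t /m; field.
  have : t * f x0 + (1 - t) * f m - f x0 = K * h by rewrite /t /K; field.
  lr.
have Kd : K * d = 2 * (f m - f x0) by rewrite /K; field.
have [dgt|dlt|deq] := ltgtP 0 d; last 1 first.
- by move: dn0; rewrite -deq eqxx.
- have : derive1 f x0 <= K.
    apply: (@der_le _ _ (d / 2)); first lr.
    move=> h h0 hd; apply: key.
    rewrite divr_gt0 //= ltr_pdivrMr // mulrC mulrA.
    have -> : d * 1 / 2 = d / 2 by rewrite mulr1.
    done.
  move=> H; have : derive1 f x0 * d <= K * d by rewrite ler_wpM2r // ltW.
  lr.
- have : K <= derive1 f x0.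
    apply: (@der_ge _ _ (- (d / 2))); first lr.
    move=> h h0 hd.
    have hn : 0 < h / d.
      have -> : h / d = (- h) / (- d) by rewrite invrN mulrNN.
      apply: divr_gt0; lr.
    apply: key; rewrite hn /=.
    rewrite ltr_ndivrMr // mulrC mulrA mulr1; lr.
  move=> H; have : derive1 f x0 * d <= K * d by rewrite ler_wnM2r // ltW.
  lr.
Qed.

Lemma der_ger x0 K e : 0 < e -> (forall h, 0 < h -> h < e -> K * h <= f (h + x0) - f x0) ->
  K <= derive1 f x0.
Proof.
move=> e0 H0.
have H : forall h, 0 < h -> h < e -> K <= Q x0 h.
  move=> h h0 he; rewrite /Q mulrC ler_pdivlMr //; exact: H0.
rewrite derive1E /derive (cvg_at_rightE _ _ (fd x0)).
apply: limr_ge; first by apply/cvg_ex; eexists; exact: cvg_dnbhs_at_right (fd x0).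
near=> h; have -> : h *: (1:R) = h by rewrite -[h *: _]/(h * 1) mulr1.
apply: H.
  by near: h; exact: nbhs_right_gt.
by near: h; exact: nbhs_right_lt.
Unshelve. all: by end_near. Qed.

Lemma der_lel x0 K e : 0 < e -> (forall h, - e < h -> h < 0 -> K * h <= f (h + x0) - f x0) ->
  derive1 f x0 <= K.
Proof.
move=> e0 H0.
have H : forall h, - e < h -> h < 0 -> Q x0 h <= K.
  move=> h h0 he; rewrite /Q mulrC ler_ndivrMr //; exact: H0.
rewrite derive1E /derive (cvg_at_leftE _ _ (fd x0)).
apply: limr_le; first by apply/cvg_ex; eexists; exact: cvg_dnbhs_at_left (fd x0).
near=> h; have -> : h *: (1:R) = h by rewrite -[h *: _]/(h * 1) mulr1.
apply: H.
  by near: h; apply: nbhs_left_gt; rewrite ltrNl oppr0.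
by near: h; exact: nbhs_left_lt.
Unshelve. all: by end_near. Qed.

Lemma foutr s : a <= s -> f s = s.
Proof. move=> h; have e : `|s| = s by rewrite ger0_norm // (le_trans (ltW a0) h). by have := fout s; rewrite e; apply. Qed.

Lemma foutl s : s <= - a -> f s = - s.
Proof.
move=> h; have e : `|s| = - s by rewrite ltr0_norm // (le_lt_trans h) // oppr_lt0.
by have := fout s; rewrite e lerNr; apply.
Qed.

Lemma fa : f a = a.
Proof. by rewrite fout ger0_norm // ltW. Qed.

Lemma fma : f (- a) = a.
Proof. by rewrite fev fa. Qed.

Lemma dfa : derive1 f a = 1.
Proof.
have H : forall h, 0 < h -> f (h + a) - f a = 1 * h.
  move=> h h0; rewrite fa foutr; lr.
apply/eqP; rewrite eq_le; apply/andP; split.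
- by apply: (@der_le _ _ 1) => // h h0 _; rewrite H.
- by apply: (@der_ger _ _ 1) => // h h0 _; rewrite H.
Qed.

Lemma dfma : derive1 f (- a) = -1.
Proof.
have H : forall h, h < 0 -> f (h + - a) - f (- a) = -1 * h.
  move=> h h0; rewrite fma foutl; lr.
apply/eqP; rewrite eq_le; apply/andP; split.
- by apply: (@der_lel _ _ 1) => // h _ h0; rewrite H.
- by apply: (@der_ge _ _ 1) => // h _ h0; rewrite H.
Qed.

Lemma f_gt_abs x : - a < x < a -> `|x| < f x.
Proof.
move=> hx.
have t1 := @tangent a x ltac:(lr) ltac:(lr) ltac:(rewrite lt_eqF //; lr).
have t2 := @tangent (- a) x ltac:(lr) ltac:(lr) ltac:(rewrite gt_eqF //; lr).
rewrite fa dfa in t1; rewrite fma dfma in t2.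
case: (lerP 0 x) => x0; [rewrite ger0_norm // | rewrite ltr0_norm //]; lr.
Qed.

Lemma f_ge_abs x : `|x| <= f x.
Proof.
have [hx|hx] := lerP a `|x|; first by rewrite fout.
apply/ltW/f_gt_abs; move: hx; rewrite ltr_norml; lr.
Qed.

Lemma f_eq_abs x : f x = `|x| <-> (x <= - a \/ a <= x).
Proof.
split.
- move=> fx; case: (lerP x (- a)) => h1; first by left.
  case: (lerP a x) => h2; first by right.
  have := @f_gt_abs x ltac:(lr); lr.
- case=> h; [rewrite foutl // ltr0_norm // | rewrite foutr // ger0_norm //].
  by apply: le_lt_trans h _; rewrite oppr_lt0.
  exact: le_trans (ltW a0) h.
Qed.

Lemma fc : continuous f.
Proof. by move=> x; apply/differentiable_continuous/derivable1_diffP/fd. Qed.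

Lemma df_mono x y : -a <= x -> x < y -> y <= a -> derive1 f x < derive1 f y.
Proof.
move=> h1 h2 h3.
have t1 := @tangent x y ltac:(lr) ltac:(lr) ltac:(rewrite gt_eqF //; lr).
have t2 := @tangent y x ltac:(lr) ltac:(lr) ltac:(rewrite lt_eqF //; lr).
have : (derive1 f y - derive1 f x) * (y - x) > 0 by nr.
rewrite pmulr_lgt0; [lr | lr].
Qed.

Definition xp := xplus a al f.

Lemma xp_spec : - a < xp < a /\ derive1 f xp = al.
Proof.
have [c hc dc] : exists2 c, c \in `[- a, a] & derive1 f c = al.
  apply: IVT; first lr.
  - by apply: continuous_subspaceT.
  - rewrite dfa dfma ge_min le_max; apply/andP; split; apply/orP; [left|right]; lr.
move: hc; rewrite in_itv /= => hc.
have -> : xp = c.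
  rewrite /xp /xplus; apply: xget_unique; first by split.
  move=> y [hy dy]; apply/eqP; case: (ltgtP y c) => // [yc|cy].
  - have := @df_mono y c ltac:(lr) yc ltac:(lr); lr.
  - have := @df_mono c y ltac:(lr) cy ltac:(lr); lr.
split => //; apply/andP; split.
- case: (ltgtP (- a) c) => // h; first lr.
  by move: dc; rewrite -h dfma; lr.
- case: (ltgtP c a) => // h; first lr.
  by move: dc; rewrite h dfa; lr.
Qed.

Notation F := (Fa al f).
Definition m := F xp.

Lemma FE s : F s = f s - al * s.
Proof. by []. Qed.

Lemma Fc : continuous F.
Proof.
move=> x; rewrite /Fa; apply: continuousB; first exact: fc.
by apply: continuousM; [exact: cvg_cst | exact: cvg_id].
Qed.

Lemma cvxF x y t : -a <= x <= a -> -a <= y <= a -> 0 <= t <= 1 ->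
  F (t * x + (1 - t) * y) <= t * F x + (1 - t) * F y.
Proof.
move=> hx hy ht; have := @cvx _ _ _ hx hy ht; rewrite !FE.
have : al * (t * x + (1 - t) * y) = t * (al * x) + (1 - t) * (al * y) by ring.
lr.
Qed.

Lemma Fa_val : F a = (1 - al) * a.
Proof. by rewrite FE fa; ring. Qed.

Lemma Fma_val : F (- a) = (1 + al) * a.
Proof. by rewrite FE fma; ring. Qed.

Lemma Fr s : a <= s -> F s = (1 - al) * s.
Proof. by move=> h; rewrite FE foutr //; ring. Qed.

Lemma Fl s : s <= - a -> F s = - (1 + al) * s.
Proof. by move=> h; rewrite FE foutl //; ring. Qed.

Lemma xp_in : - a < xp < a.
Proof. by case: xp_spec. Qed.

Lemma dxp : derive1 f xp = al.
Proof. by case: xp_spec. Qed.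

Lemma F_min_in y : -a <= y <= a -> y != xp -> F xp < F y.
Proof.
move=> hy yx; have := xp_in => hx.
have := @tangent xp y ltac:(lr) hy yx; rewrite dxp !FE.
have : al * (y - xp) = al * y - al * xp by ring.
lr.
Qed.

Lemma F_min y : y != xp -> F xp < F y.
Proof.
move=> yx; have := xp_in => hx.
case: (lerP y a) => ha; case: (lerP (- a) y) => hb.
- by apply: F_min_in => //; rewrite hb ha.
- have h1 := @F_min_in (- a) ltac:(lr) ltac:(rewrite lt_eqF //; lr).
  rewrite Fma_val in h1; rewrite (Fl _ (ltW hb)).
  have : (1 + al) * a < - (1 + al) * y by rewrite mulNr -mulrN ltr_pM2l; lr.
  lr.
- have h1 := @F_min_in a ltac:(lr) ltac:(rewrite gt_eqF //; lr).
  rewrite Fa_val in h1; rewrite (Fr _ (ltW ha)).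
  have : (1 - al) * a < (1 - al) * y by rewrite ltr_pM2l; lr.
  lr.
- lr.
Qed.

Lemma m_gt0 : 0 < m.
Proof.
have := xp_in => hx.
have := @f_gt_abs xp ltac:(lr); rewrite /m FE.
case: (lerP 0 xp) => h; [rewrite ger0_norm // | rewrite ltr0_norm //]; nr.
Qed.

Lemma m_ge : (1 - al) * xp <= m /\ - (1 + al) * xp <= m.
Proof.
have := f_ge_abs xp; rewrite /m FE => h.
have h1 := ler_norm xp; have h2 : - xp <= `|xp| by rewrite -normrN ler_norm.
split; nr.
Qed.

Lemma F_inc_in y z : xp <= y -> y < z -> z <= a -> F y < F z.
Proof.
move=> h1 h2 h3; have := xp_in => hx.
have [->|yx] := eqVneq y xp; first by apply: F_min; rewrite gt_eqF //; lr.
have yx' : xp < y by rewrite lt_neqAle eq_sym yx.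
set t := (z - y) / (z - xp).
have ht : 0 < t < 1.
  rewrite /t; apply/andP; split; first by apply: divr_gt0; lr.
  by rewrite ltr_pdivrMr; lr.
have ey : t * xp + (1 - t) * z = y by rewrite /t; field; lr.
have := @cvxF xp z t ltac:(lr) ltac:(lr) ltac:(lr); rewrite ey.
have := @F_min z ltac:(rewrite gt_eqF //; lr).
move=> hm hc.
have : t * F xp < t * F z by rewrite ltr_pM2l //; case/andP: ht.
lr.
Qed.

Lemma F_inc y z : xp <= y -> y < z -> F y < F z.
Proof.
move=> h1 h2; have := xp_in => hx.
case: (lerP z a) => hz; first exact: F_inc_in.
case: (lerP a y) => hy.
- rewrite !Fr; try lr. by rewrite ltr_pM2l; lr.
- have := @F_inc_in y a h1 hy (lexx a); rewrite Fa_val (Fr _ (ltW hz)).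
  have : (1 - al) * a < (1 - al) * z by rewrite ltr_pM2l; lr.
  lr.
Qed.

Lemma F_dec_in y z : -a <= y -> y < z -> z <= xp -> F z < F y.
Proof.
move=> h1 h2 h3; have := xp_in => hx.
have [->|zx] := eqVneq z xp; first by apply: F_min; rewrite lt_eqF //; lr.
have zx' : z < xp by rewrite lt_neqAle zx.
set t := (xp - z) / (xp - y).
have ht : 0 < t < 1.
  rewrite /t; apply/andP; split; first by apply: divr_gt0; lr.
  by rewrite ltr_pdivrMr; lr.
have ez : t * y + (1 - t) * xp = z by rewrite /t; field; lr.
have := @cvxF y xp t ltac:(lr) ltac:(lr) ltac:(lr); rewrite ez.
have := @F_min y ltac:(rewrite lt_eqF //; lr).
move=> hm hc.
have : (1 - t) * F xp < (1 - t) * F y by rewrite ltr_pM2l //; lr.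
lr.
Qed.

Lemma F_dec y z : y < z -> z <= xp -> F z < F y.
Proof.
move=> h1 h2; have := xp_in => hx.
case: (lerP (- a) y) => hy; first exact: F_dec_in.
case: (lerP z (- a)) => hz.
- rewrite !Fl; try lr. rewrite !mulNr ltrN2 ltr_pM2l; lr.
- have := @F_dec_in (- a) z (lexx _) hz h2; rewrite Fma_val (Fl _ (ltW hy)).
  have : (1 + al) * a < - (1 + al) * y by rewrite mulNr -mulrN ltr_pM2l; lr.
  lr.
Qed.

Arguments F_inc {y z}.
Arguments F_dec {y z}.

Definition W c := Finv a al f c.

Lemma W_ex c : m <= c -> exists2 w, xp <= w & F w = c.
Proof.
move=> hc; have := m_gt0 => hm; have := xp_in => hx.
set b := a + c / (1 - al).
have hb : a <= b by rewrite /b lerDl; apply: divr_ge0; lr.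
have Fb : F b = (1 - al) * a + c by rewrite Fr // /b; field; lr.
have [w hw Fw] : exists2 w, w \in `[xp, b] & F w = c.
  apply: IVT; first lr.
  - exact: continuous_subspaceT Fc.
  - rewrite Fb ge_min le_max; apply/andP; split; apply/orP; [left|right]; rewrite /m in hc; nr.
by exists w => //; move: hw; rewrite in_itv /= => /andP[].
Qed.
Arguments W_ex {c}.

Lemma W_uniq c z : xp <= z -> F z = c -> W c = z.
Proof.
move=> hz Fz; rewrite /W /Finv -/xp; apply: xget_unique; first by split.
move=> y [hy Fy]; apply/eqP; case: (ltgtP y z) => // [yz|zy].
- by have := F_inc hy yz; lr.
- by have := F_inc hz zy; lr.
Qed.
Arguments W_uniq {c z}.

Lemma W_spec c : m <= c -> xp <= W c /\ F (W c) = c.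
Proof. by move=> /W_ex [w hw Fw]; rewrite (W_uniq hw Fw). Qed.
Arguments W_spec {c}.

Lemma U_ex c : m <= c -> exists2 u, u <= xp & F u = c.
Proof.
move=> hc; have := m_gt0 => hm; have := xp_in => hx.
set b := - a - c / (1 + al).
have hb : b <= - a by rewrite /b lerBlDr lerDl; apply: divr_ge0; lr.
have Fb : F b = (1 + al) * a + c by rewrite Fl // /b; field; lr.
have [w hw Fw] : exists2 w, w \in `[b, xp] & F w = c.
  apply: IVT; first lr.
  - exact: continuous_subspaceT Fc.
  - rewrite Fb ge_min le_max; apply/andP; split; apply/orP; [right|left]; rewrite /m in hc; nr.
by exists w => //; move: hw; rewrite in_itv /= => /andP[].
Qed.
Arguments U_ex {c}.

Lemma F_dec_iff u1 u2 : u1 <= xp -> u2 <= xp -> (F u1 <= F u2) = (u2 <= u1).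
Proof.
move=> h1 h2; case: (ltgtP u2 u1) => h.
- by apply/idP; apply/ltW/F_dec.
- by apply/negbTE; rewrite -ltNge; apply: F_dec.
- by rewrite h lexx.
Qed.
Arguments F_dec_iff {u1 u2}.

Lemma F_inc_iff w1 w2 : xp <= w1 -> xp <= w2 -> (F w1 <= F w2) = (w1 <= w2).
Proof.
move=> h1 h2; case: (ltgtP w1 w2) => h.
- by apply/idP; apply/ltW/F_inc.
- by apply/negbTE; rewrite -ltNge; apply: F_inc.
- by rewrite h lexx.
Qed.
Arguments F_inc_iff {w1 w2}.

Lemma F_ge_m s : m <= F s.
Proof. have [->|h] := eqVneq s xp; first exact: lexx. exact/ltW/F_min. Qed.

Lemma W_m : W m = xp.
Proof. exact: W_uniq. Qed.

Lemma W_le c1 c2 : m <= c1 -> c1 <= c2 -> W c1 <= W c2.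
Proof.
move=> h1 h2; have [x1 F1] := W_spec h1; have [x2 F2] := W_spec (le_trans h1 h2).
by rewrite -F_inc_iff // F1 F2.
Qed.
Arguments W_le {c1 c2}.

Lemma f_lip w2 w1 : -a <= w2 -> w2 < w1 -> f w1 - f w2 <= w1 - w2.
Proof.
move=> h1 h2; have g2 := f_ge_abs w2; have n2 := ler_norm w2.
case: (lerP w1 a) => h3.
- set t := (a - w1) / (a - w2).
  have ht : 0 <= t <= 1.
    rewrite /t; apply/andP; split; first by apply: divr_ge0; lr.
    by rewrite ler_pdivrMr; lr.
  have e1 : t * w2 + (1 - t) * a = w1 by rewrite /t; field; lr.
  have := @cvx w2 a t ltac:(lr) ltac:(lr) ht; rewrite e1 fa => hc.
  have : (1 - t) * (a - f w2) <= (1 - t) * (a - w2) by rewrite ler_wpM2l; lr.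
  have : (1 - t) * (a - w2) = w1 - w2 by rewrite /t; field; lr.
  have : t * f w2 + (1 - t) * a - f w2 = (1 - t) * (a - f w2) by ring.
  lr.
- rewrite (foutr _ (ltW h3)); case: (lerP a w2) => h4; first by rewrite foutr //; lr.
  lr.
Qed.

Lemma W_lip c1 c2 : m <= c2 -> c2 <= c1 -> (1 - al)^-1 * (c1 - c2) <= W c1 - W c2.
Proof.
move=> h2 h21; have h1 := le_trans h2 h21.
have [x1 F1] := W_spec h1; have [x2 F2] := W_spec h2.
have hle := W_le h2 h21.
have := xp_in => hx.
rewrite mulrC ler_pdivrMr; last lr.
case: (ltgtP (W c2) (W c1)) => h.
- have := @f_lip (W c2) (W c1) ltac:(lr) h.
  move: F1 F2; rewrite !FE => F1 F2.
  have : al * W c1 - al * W c2 = al * (W c1 - W c2) by ring.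
  nr.
- lr.
- have : c1 = c2 by rewrite -F1 -F2 h.
  move=> ->; rewrite !subrr mul0r; lr.
Qed.
Arguments W_lip {c1 c2}.

Lemma mono_cont (g : R -> R) c0 : (forall x y, x <= y -> g x <= g y) ->
  (forall e, 0 < e -> exists2 c1, c1 < c0 & g c0 - e < g c1) ->
  (forall e, 0 < e -> exists2 c2, c0 < c2 & g c2 < g c0 + e) ->
  {for c0, continuous g}.
Proof.
move=> gm hl hr; apply/cvgrPdist_lt => e e0.
have [c1 h1 g1] := hl e e0; have [c2 h2 g2] := hr e e0.
have : c0 \in `]c1, c2[ by rewrite in_itv /= h1 h2.
move=> /near_in_itvoo; apply: filterS => c; rewrite in_itv /= => /andP[hc1 hc2].
have := gm _ _ (ltW hc1); have := gm _ _ (ltW hc2).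
have := gm _ _ (ltW h1); have := gm _ _ (ltW h2).
move=> *; rewrite ltr_norml; apply/andP; split; lra.
Qed.

Definition Wt c := W (Num.max c m).

Lemma Wt_le x y : x <= y -> Wt x <= Wt y.
Proof.
move=> h; apply: W_le; first by rewrite le_max lexx orbT.
by rewrite ge_max !le_max h lexx /= orbT.
Qed.

Lemma maxm1 c : c <= m -> Num.max c m = m.
Proof. by move=> h; apply/eqP; rewrite eq_le ge_max h lexx le_max lexx orbT. Qed.

Lemma maxm2 c : m <= c -> Num.max c m = c.
Proof. by move=> h; apply/eqP; rewrite eq_le ge_max h lexx le_max lexx. Qed.

Lemma Wt_low c : c <= m -> Wt c = xp.
Proof. by move=> h; rewrite /Wt maxm1 // W_m. Qed.

Lemma Wt_high c : m <= c -> Wt c = W c.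
Proof. by move=> h; rewrite /Wt maxm2. Qed.

Lemma Wt_spec c : xp <= Wt c /\ c <= F (Wt c).
Proof.
case: (lerP c m) => h.
  by rewrite Wt_low.
rewrite Wt_high ?(ltW h) //; have [h1 h2] := W_spec (ltW h); split; first exact: h1.
rewrite h2; exact: lexx.
Qed.

Lemma Wt_cont : continuous Wt.
Proof.
move=> c0; apply: mono_cont; first exact: Wt_le.
- move=> e e0; have [x0 Fx0] := Wt_spec c0.
  case: (lerP (Wt c0 - e / 2) xp) => hz.
  + exists (c0 - 1); first lra.
    have [x1 _] := Wt_spec (c0 - 1); lra.
  + have hc0 : m < c0.
      rewrite ltNge; apply/negP => hc; move: hz; rewrite Wt_low //; lra.
    move: x0 Fx0 hz; rewrite Wt_high ?(ltW hc0) // => x0 Fx0 hz.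
    have [_ Fw] := W_spec (ltW hc0).
    exists (F (W c0 - e / 2)).
      rewrite -{2}Fw; apply: F_inc; lra.
    rewrite Wt_high; last exact: F_ge_m.
    rewrite (@W_uniq (F (W c0 - e / 2)) (W c0 - e / 2)) //; lra.
- move=> e e0; have [x0 Fx0] := Wt_spec c0.
  exists (F (Wt c0 + e / 2)).
    apply: (le_lt_trans Fx0); apply: F_inc; lra.
  rewrite Wt_high; last exact: F_ge_m.
  rewrite (@W_uniq (F (Wt c0 + e / 2)) (Wt c0 + e / 2)) //; lra.
Qed.

Definition Xf u := u + delta a al f u.

Lemma XfE u : Xf u = u + (1 - al)^-1 * F u - W (F u).
Proof. by rewrite /Xf /delta /phi /W addrA. Qed.

Lemma Xf_cont : continuous Xf.
Proof.
have e : Xf = ((idfun : R -> R) + (cst ((1 - al)^-1) \* F)) - (Wt \o F).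
  apply: funext => u; rewrite XfE /= (_ : W (F u) = Wt (F u)) //.
  by rewrite Wt_high // F_ge_m.
rewrite e => u; apply: continuousB; [apply: continuousD|].
- exact: cvg_id.
- apply: continuousM; [exact: cvg_cst | exact: Fc].
- apply: continuous_comp; [exact: Fc | exact: Wt_cont].
Qed.

Lemma X_inc u1 u2 : u1 <= u2 -> u2 <= xp -> u2 - u1 <= Xf u2 - Xf u1.
Proof.
move=> h1 h2.
have hF : F u2 <= F u1 by rewrite F_dec_iff //; exact: le_trans h1 h2.
have := W_lip (F_ge_m u2) hF; rewrite !XfE mulrBr.
lr.
Qed.
Arguments X_inc {u1 u2}.

Lemma X_inc_strict {u1 u2} : u1 < u2 -> u2 <= xp -> Xf u1 < Xf u2.
Proof. move=> h1 h2; have := X_inc (ltW h1) h2; lr. Qed.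

Lemma X_left u : u <= - a -> Xf u = u.
Proof.
move=> h; rewrite XfE Fl //.
have hx := xp_in.
set c := - (1 + al) * u.
have hc : (1 - al) * a <= c by rewrite /c; nr.
have hz : a <= (1 - al)^-1 * c by rewrite mulrC ler_pdivlMr; lr.
rewrite (@W_uniq c ((1 - al)^-1 * c)); first lr.
- lr.
- rewrite Fr //; field; lr.
Qed.

Definition sa := salpha a al f.

Lemma X_xp : Xf xp = sa.
Proof. by []. Qed.

Lemma sa_val : sa = (1 - al)^-1 * m.
Proof. by rewrite -X_xp XfE -/m W_m; ring. Qed.

Lemma sa_pos : 0 < sa.
Proof. rewrite sa_val; apply: mulr_gt0; [rewrite invr_gt0; lr | exact: m_gt0]. Qed.

Definition tau' x := tau a al f x.

Lemma tau_uniq {x t} : t <= xp -> Xf t = x -> tau' x = t.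
Proof.
move=> ht hX; rewrite /tau' /tau -/xp; apply: xget_unique; first by split.
move=> y [hy hXy]; rewrite -/(Xf y) in hXy; apply/eqP.
case: (ltgtP y t) => // h.
- by have := X_inc_strict h ht; lr.
- by have := X_inc_strict h hy; lr.
Qed.

Lemma tau_spec {x} : x <= sa -> tau' x <= xp /\ Xf (tau' x) = x.
Proof.
move=> hx; have hxp := xp_in.
suff [t ht hXt] : exists2 t, t <= xp & Xf t = x by rewrite (tau_uniq ht hXt).
case: (lerP x (- a)) => h.
  by exists x; [lr | rewrite X_left].
have [t ht hXt] : exists2 t, t \in `[- a, xp] & Xf t = x.
  apply: IVT; first lr.
  - exact: continuous_subspaceT Xf_cont.
  - rewrite X_left ?lexx // X_xp ge_min le_max; apply/andP; split; apply/orP; [left|right]; lr.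
by exists t => //; move: ht; rewrite in_itv /= => /andP[].
Qed.

Lemma meas1 (s1 s2 : R) : s1 <= s2 ->
  fine (@lebesgue_measure R `[s1, s2]) = s2 - s1.
Proof.
move=> h; rewrite lebesgue_measure_itv /= lte_fin.
case: ltrP => h' /=; first by [].
have -> : s1 = s2 by apply/eqP; rewrite eq_le h h'.
by rewrite subrr.
Qed.

Lemma meas1E (s1 s2 : R) : s1 <= s2 ->
  (@lebesgue_measure R `[s1, s2]) = (s2 - s1)%:E.
Proof.
move=> h; rewrite lebesgue_measure_itv /= lte_fin.
case: ltrP => h' /=; first by [].
have -> : s1 = s2 by apply/eqP; rewrite eq_le h h'.
by rewrite subrr.
Qed.

Lemma meas2 (s1 s2 s3 s4 : R) : s1 <= s2 -> s2 < s3 -> s3 <= s4 ->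
  fine (@lebesgue_measure R (`[s1, s2] `|` `[s3, s4])) = (s2 - s1) + (s4 - s3).
Proof.
move=> h1 h2 h3; rewrite measureU //=.
- by rewrite !meas1E.
- apply/seteqP; split => x //= [] /=; rewrite !in_itv /= => /andP[_ hx] /andP[hy _].
  have := le_lt_trans hx h2; have := lt_le_trans h2 hy. lra.
Qed.

Lemma inf_oo (x y : R) : x < y -> inf `]x, y[ = x.
Proof. by move=> h; rewrite inf_itv // bnd_simp. Qed.

Lemma sup_oo (x y : R) : x < y -> sup `]x, y[ = y.
Proof. by move=> h; rewrite sup_itv // bnd_simp. Qed.

Lemma setf : [set x | f x <> `|x|] = [set` `]- a, a[].
Proof.
apply/seteqP; split => x /=; rewrite in_itv /=.
- move=> h; apply/andP; split; rewrite ltNge; apply/negP => h'; apply: h; apply/f_eq_abs; lr.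
- move=> /andP[h1 h2] /f_eq_abs; lr.
Qed.

Lemma ag_f : a_g f = - a.
Proof. by rewrite /a_g setf inf_oo //; lr. Qed.

Lemma bg_f : b_g f = a.
Proof. by rewrite /b_g setf sup_oo //; lr. Qed.

Lemma grfE x y : gr f (x, y) <-> - a <= x <= a /\ 0 <= y /\ `|x| <= y <= f x.
Proof. by rewrite /gr /= ag_f bg_f. Qed.

Notation Sh := (Sh_fun a al f).

Lemma ShE x : x <= sa -> Sh x = al * x + F (tau' x).
Proof. by move=> h; rewrite /Sh_fun -/sa h. Qed.

Lemma ShE2 x : sa < x -> Sh x = x.
Proof. by move=> h; rewrite /Sh_fun -/sa leNgt h. Qed.

Lemma W_le_z {c} : m <= c -> W c <= (1 - al)^-1 * c.
Proof.
move=> hc; have [h1 h2] := W_spec hc; have [mg1 mg2] := m_ge.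
have hz : xp <= (1 - al)^-1 * c by rewrite mulrC ler_pdivlMr; lr.
rewrite -F_inc_iff // h2 FE.
have := f_ge_abs ((1 - al)^-1 * c); have := ler_norm ((1 - al)^-1 * c).
have : (1 - al) * ((1 - al)^-1 * c) = c by field; lr.
nr.
Qed.

Lemma tau_left x : x <= - a -> tau' x = x.
Proof. move=> h; apply: tau_uniq; [have := xp_in; lr | exact: X_left]. Qed.

Lemma Sh_left x : x <= - a -> Sh x = `|x|.
Proof.
move=> h; have := sa_pos => hs.
rewrite ShE; last lr.
rewrite tau_left // FE foutl // ltr0_norm; lr.
Qed.

Lemma tau_sa : tau' sa = xp.
Proof. exact: tau_uniq. Qed.

Lemma Sh_sa : Sh sa = sa.
Proof.
rewrite ShE // tau_sa -/m; have := sa_val => e.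
have : (1 - al) * sa = m by rewrite e; field; lr.
lr.
Qed.

Lemma Sh_mid {x} : - a < x < sa -> `|x| < Sh x.
Proof.
move=> /andP[h1 h2]; rewrite ShE; last lr.
have [ht hX] := tau_spec (ltW h2).
set t := tau' x in ht hX *.
have hxp := xp_in.
have tl : - a < t.
  rewrite ltNge; apply/negP => h; move: hX; rewrite X_left //; lr.
have tr : t < xp.
  rewrite lt_neqAle ht andbT; apply/negP => /eqP e; move: hX; rewrite e X_xp; lr.
have hc := F_ge_m t.
have [w1 w2] := W_spec hc.
have wz := W_le_z hc.
move: hX; rewrite XfE => hX.
have ft := @f_gt_abs t ltac:(lr).
have n1 := ler_norm t; have n2 : - t <= `|t| by rewrite -normrN ler_norm.
have e1 : (1 - al) * ((1 - al)^-1 * F t) = F t by field; lr.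
rewrite FE in e1 hX wz hc *.
case: (lerP 0 x) => hx0; [rewrite ger0_norm // | rewrite ltr0_norm //]; nr.
Qed.

Lemma setSh : [set x | Sh x <> `|x|] = [set` `]- a, sa[].
Proof.
have := sa_pos => hs.
apply/seteqP; split => x /=; rewrite in_itv /=.
- move=> h; apply/andP; split; rewrite ltNge; apply/negP => h'; apply: h.
  + by apply: Sh_left.
  + move: h'; rewrite le_eqVlt => /orP[/eqP <-|h'].
      by rewrite Sh_sa ger0_norm //; lr.
    by rewrite ShE2 // ger0_norm //; lr.
- by move=> hx; have := Sh_mid hx; lr.
Qed.

Lemma ag_Sh : a_g Sh = - a.
Proof. by rewrite /a_g setSh inf_oo //; have := sa_pos; lr. Qed.

Lemma bg_Sh : b_g Sh = sa.
Proof. by rewrite /b_g setSh sup_oo //; have := sa_pos; lr. Qed.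

Lemma grShE x y : gr Sh (x, y) <-> - a <= x <= sa /\ 0 <= y /\ `|x| <= y <= Sh x.
Proof. by rewrite /gr /= ag_Sh bg_Sh. Qed.

Definition U c := xget 0 [set u | u <= xp /\ F u = c].

Lemma U_uniq {c u} : u <= xp -> F u = c -> U c = u.
Proof.
move=> hu Fu; rewrite /U; apply: xget_unique; first by split.
move=> y [hy Fy]; apply/eqP; case: (ltgtP y u) => // h.
- by have := F_dec h hu; lr.
- by have := F_dec h hy; lr.
Qed.

Lemma U_spec {c} : m <= c -> U c <= xp /\ F (U c) = c.
Proof. by move=> /U_ex [u hu Fu]; rewrite (U_uniq hu Fu). Qed.

Definition E c := if c <= m then (1 - al)^-1 * c else Xf (U c).

Lemma L1 c x : (- ((1 + al)^-1 * c) <= x) = (0 <= (1 + al) * x + c).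
Proof.
have h : 0 < 1 + al by lr.
rewrite -(ler_pM2l h) mulrN mulrA mulfV ?gt_eqF // mul1r; apply/idP/idP; lr.
Qed.

Lemma L2 c x : (x <= (1 - al)^-1 * c) = ((1 - al) * x <= c).
Proof.
have h : 0 < 1 - al by lr.
by rewrite -(ler_pM2l h) mulrA mulfV ?gt_eqF // mul1r.
Qed.

Lemma tau_ge {x} : - a <= x -> x <= sa -> - a <= tau' x.
Proof.
move=> h1 h2; have [ht hX] := tau_spec h2.
rewrite leNgt; apply/negP => h; move: hX; rewrite X_left; lr.
Qed.

Lemma E_le {c} : 0 <= c -> E c <= (1 - al)^-1 * c /\ E c <= sa.
Proof.
move=> c0; rewrite /E; case: ifP => hc.
- split; first exact: lexx.
  rewrite sa_val; apply: ler_wpM2l => //; rewrite invr_ge0; lr.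
- move/negbT: hc; rewrite -ltNge => hc.
  have [u1 u2] := U_spec (ltW hc).
  split.
  + rewrite XfE u2; have := W_spec (ltW hc) => -[w1 w2]; lr.
  + rewrite -X_xp; have := X_inc u1 (lexx xp); lr.
Qed.

Lemma E_key c x : m < c -> x <= sa -> (x <= E c) = (c <= F (tau' x)).
Proof.
move=> hc hx; rewrite /E (leNgt c m) hc /=.
have [u1 u2] := U_spec (ltW hc); have [t1 t2] := tau_spec hx.
have e : (c <= F (tau' x)) = (tau' x <= U c) by rewrite -(@F_dec_iff (U c) (tau' x) u1 t1) u2.
rewrite e; apply/idP/idP => h.
- rewrite leNgt; apply/negP => h'; have := X_inc_strict h' t1; lr.
- have := X_inc h u1; lr.
Qed.

Lemma main_equiv x y : let c := y - al * x in
  (0 <= c <= (1 + al) * a /\ - ((1 + al)^-1 * c) <= x <= E c) <->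
  (- a <= x <= sa /\ 0 <= y /\ `|x| <= y <= Sh x).
Proof.
move=> c; have n1 := ler_norm x; have n2 : - x <= `|x| by rewrite -normrN ler_norm.
have hxp := xp_in.
split.
- move=> [/andP[c0 c1] /andP[hx1 hx2]].
  have [e1 e2] := E_le c0.
  move: hx1; rewrite L1 => hx1.
  have hx3 := le_trans hx2 e1; move: hx3; rewrite L2 => hx3.
  have hxs := le_trans hx2 e2.
  have hxa : - a <= x.
    have : 0 <= (1 + al) * (x + a) by lr.
    rewrite pmulr_rge0; lr.
  have ay : `|x| <= y by case: (lerP 0 x) => h; [rewrite ger0_norm | rewrite ltr0_norm]; rewrite /c in hx1 hx3; lr.
  split; first lr.
  split; first by apply: le_trans ay; exact: normr_ge0.
  apply/andP; split => //.
  rewrite ShE //.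
  suff : c <= F (tau' x) by rewrite /c; lr.
  case: (lerP c m) => hcm.
    exact: le_trans hcm (F_ge_m _).
  by rewrite -E_key.
- move=> [/andP[hx1 hx2] [y0 /andP[ay ySh]]].
  move: ySh; rewrite ShE // => ySh.
  have hcF : c <= F (tau' x) by rewrite /c; lr.
  have [t1 t2] := tau_spec hx2.
  have tg := tau_ge hx1 hx2.
  have Ft : F (tau' x) <= (1 + al) * a.
    rewrite -Fma_val F_dec_iff //; lr.
  have c0 : 0 <= c.
    have : al * x <= al * `|x| by rewrite ler_wpM2l.
    have : al * `|x| <= `|x| by rewrite ler_piMl //; lr.
    rewrite /c; lr.
  split; first lr.
  rewrite L1; apply/andP; split; first by rewrite /c; lr.
  case: (lerP c m) => hcm.
    rewrite /E hcm L2 /c; lr.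
  by rewrite E_key.
Qed.

Definition Gx c x := - a <= x <= a /\ `|x| <= al * x + c /\ al * x + c <= f x.

Lemma gr_line c x : gr f (x, al * x + c) <-> Gx c x.
Proof.
rewrite grfE /Gx; split.
- by move=> [h1 [_ /andP[h2 h3]]].
- move=> [h1 [h2 h3]]; split => //; split; last by rewrite h2 h3.
  exact: le_trans (normr_ge0 _) h2.
Qed.

Lemma L3 c x : ((1 - al)^-1 * c <= x) = (c <= (1 - al) * x).
Proof.
have h : 0 < 1 - al by lr.
by rewrite -(ler_pM2l h) mulrA mulfV ?gt_eqF // mul1r.
Qed.

Lemma L4 c x : (x <= - ((1 + al)^-1 * c)) = ((1 + al) * x + c <= 0).
Proof.
have h : 0 < 1 + al by lr.
rewrite -(ler_pM2l h) mulrN mulrA mulfV ?gt_eqF // mul1r; apply/idP/idP; lr.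
Qed.

Lemma absL c x : (`|x| <= al * x + c) <->
  (- ((1 + al)^-1 * c) <= x /\ x <= (1 - al)^-1 * c).
Proof.
rewrite ler_norml L1 L2; split.
- move=> /andP[h1 h2]; split; lr.
- move=> [h1 h2]; apply/andP; split; lr.
Qed.

Lemma alx_le x : al * x <= `|x|.
Proof.
have : al * x <= al * `|x| by rewrite ler_wpM2l // ler_norm.
have : al * `|x| <= `|x| by rewrite ler_piMl //; lr.
lr.
Qed.

Lemma Gx_none c x : (c < 0 \/ (1 + al) * a < c) -> ~ Gx c x.
Proof.
have hxp := xp_in.
move=> hc [hx [h1 h2]]; case: hc => hc.
- by have := alx_le x; lr.
- have : c <= F x by rewrite FE; lr.
  case: (lerP x xp) => h.
  + have : F x <= F (- a) by rewrite F_dec_iff //; lr.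
    rewrite Fma_val; lr.
  + have : F x <= F a by rewrite F_inc_iff //; lr.
    rewrite Fa_val; nr.
Qed.

Lemma Gx_a {c x} : 0 <= c -> c <= m ->
  Gx c x <-> (- ((1 + al)^-1 * c) <= x /\ x <= (1 - al)^-1 * c).
Proof.
move=> c0 cm; have hxp := xp_in.
have Fa_m := F_ge_m a; rewrite Fa_val in Fa_m.
have Fma_m := F_ge_m (- a); rewrite Fma_val in Fma_m.
have hA : - a <= - ((1 + al)^-1 * c) by rewrite L4; lr.
have hB : (1 - al)^-1 * c <= a by rewrite L3; lr.
split.
- by move=> [_ [/absL h _]].
- move=> [h1 h2]; split; first lr.
  split; first by apply/absL.
  have := F_ge_m x; rewrite FE; lr.
Qed.

Lemma Fc_ge c x : c <= F x <-> al * x + c <= f x.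
Proof. rewrite FE; split; lr. Qed.

Lemma Gx_bc {c x} : m < c -> c <= (1 + al) * a ->
  Gx c x <-> (- a <= x <= a /\ - ((1 + al)^-1 * c) <= x /\ x <= (1 - al)^-1 * c /\
               (x <= U c \/ W c <= x)).
Proof.
move=> hc hc2; have hxp := xp_in.
have [u1 u2] := U_spec (ltW hc); have [w1 w2] := W_spec (ltW hc).
rewrite /Gx; split.
- move=> [h1 [/absL [h2 h3] /Fc_ge h4]]; do 3 (split => //).
  case: (lerP x xp) => h.
  + by left; rewrite -F_dec_iff // u2.
  + by right; rewrite -F_inc_iff ?w2 //; lr.
- move=> [h1 [h2 [h3 h4]]]; split => //; split; first by apply/absL.
  apply/Fc_ge; case: h4 => h4.
  + by rewrite -{1}u2 F_dec_iff //; lr.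
  + by rewrite -{1}w2 F_inc_iff //; lr.
Qed.

Lemma bc_facts {c} : m < c -> c <= (1 + al) * a ->
  - a <= U c /\ - ((1 + al)^-1 * c) <= U c /\ U c < xp /\ xp <= W c /\
  W c <= (1 - al)^-1 * c /\ xp <= (1 - al)^-1 * c.
Proof.
move=> hc hc2; have hxp := xp_in; have [mg1 mg2] := m_ge.
have [u1 u2] := U_spec (ltW hc); have [w1 w2] := W_spec (ltW hc).
have hA : - ((1 + al)^-1 * c) <= xp by rewrite L1; lr.
split.
  by rewrite -F_dec_iff ?u2 ?Fma_val //; lr.
split.
  rewrite -F_dec_iff // u2.
  have := f_ge_abs (- ((1 + al)^-1 * c)); rewrite FE.
  have e : (1 + al) * ((1 + al)^-1 * c) = c by field; lr.
  have := @ler_norm _ (- ((1 + al)^-1 * c)); rewrite normrN => hn.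
  have hpos : 0 <= (1 + al)^-1 * c by apply: mulr_ge0; [rewrite invr_ge0; lr | have := m_gt0; lr].
  rewrite ger0_norm // => hf; lr.
split.
  rewrite lt_neqAle u1 andbT; apply/eqP => e; move: u2; rewrite e -/m; lr.
split => //.
split; first exact: W_le_z (ltW hc).
by rewrite L2; lr.
Qed.

Definition k := Num.sqrt (1 + al ^+ 2).

Lemma kpos : 0 < k.
Proof. rewrite /k sqrtr_gt0; have : 0 <= al ^+ 2 by exact: sqr_ge0. lr. Qed.

Lemma pt_eq p1 s : pt_line (p1, - p1) (v_alpha al) s =
  (p1 + s / k, al * (p1 + s / k) + (- (1 + al) * p1)).
Proof. by rewrite /pt_line /v_alpha /= -/k; congr (_, _); ring. Qed.

Lemma sset p1 : [set s | gr f (pt_line (p1, - p1) (v_alpha al) s)] =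
  [set s | Gx (- (1 + al) * p1) (p1 + s / k)].
Proof. by apply/seteqP; split => s /=; rewrite pt_eq => /gr_line. Qed.

Lemma pre_le p1 A s : (A <= p1 + s / k) = (k * (A - p1) <= s).
Proof.
have e : k * (p1 + s / k) = k * p1 + s by field; rewrite gt_eqF //; exact: kpos.
rewrite -[X in X = _](ler_pM2l kpos) e mulrBr; apply/idP/idP; lr.
Qed.

Lemma pre_ge p1 A s : (p1 + s / k <= A) = (s <= k * (A - p1)).
Proof.
have e : k * (p1 + s / k) = k * p1 + s by field; rewrite gt_eqF //; exact: kpos.
rewrite -[X in X = _](ler_pM2l kpos) e mulrBr; apply/idP/idP; lr.
Qed.

Lemma kle x y : x <= y -> k * x <= k * y.
Proof. by move=> h; rewrite ler_pM2l // kpos. Qed.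

Lemma klt x y : x < y -> k * x < k * y.
Proof. by move=> h; rewrite ltr_pM2l // kpos. Qed.

Lemma lm p1 : let c := - (1 + al) * p1 in 0 <= c <= (1 + al) * a ->
  line_measure (gr f) (p1, - p1) (v_alpha al) = k * (E c + (1 + al)^-1 * c).
Proof.
move=> c /andP[c0 c1]; rewrite /line_measure sset -/c.
have hxp := xp_in.
set A := - ((1 + al)^-1 * c); set B := (1 - al)^-1 * c.
have eA : A = - ((1 + al)^-1 * c) by [].
have eB : B = (1 - al)^-1 * c by [].
case: (lerP c m) => hcm.
- have hAB : A <= B.
    have : 0 <= (1 + al)^-1 * c by apply: mulr_ge0 => //; rewrite invr_ge0; lr.
    have : 0 <= (1 - al)^-1 * c by apply: mulr_ge0 => //; rewrite invr_ge0; lr.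
    rewrite /A /B; lr.
  have -> : [set s | Gx c (p1 + s / k)] = [set` `[k * (A - p1), k * (B - p1)]].
    apply/seteqP; split => s /=; rewrite in_itv /= -pre_le -pre_ge.
    + by move=> /(Gx_a c0 hcm) [h1 h2]; rewrite h1 h2.
    + by move=> /andP[h1 h2]; apply/(Gx_a c0 hcm).
  rewrite meas1; last by apply: kle; lr.
  rewrite /E hcm -/B /A; ring.
- have [f1 [f2 [f3 [f4 [f5 f6]]]]] := bc_facts hcm c1.
  have [u1 u2] := U_spec (ltW hcm); have [w1 w2] := W_spec (ltW hcm).
  have hA : - a <= A by rewrite /A L4; lr.
  have EE : E c = U c + B - W c.
    by rewrite /E leNgt hcm /= XfE u2 -/B.
  rewrite EE.
  case: (lerP (W c) a) => hw.
  + have hB : B <= a.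
      have : F (W c) <= F a by rewrite F_inc_iff //; lr.
      by rewrite w2 Fa_val /B L3.
    have -> : [set s | Gx c (p1 + s / k)] =
        [set` `[k * (A - p1), k * (U c - p1)]] `|` [set` `[k * (W c - p1), k * (B - p1)]].
      apply/seteqP; split => s /=; rewrite !in_itv /= -!pre_le -!pre_ge.
      * move=> /(Gx_bc hcm c1) [_ [h1 [h2 [h3|h3]]]]; [left|right]; lr.
      * move=> H; apply/(Gx_bc hcm c1); case: H => /andP[h1 h2].
          split; first lr. split => //. split; first lr. by left.
        split; first lr. split; first lr. split => //. by right.
    rewrite meas2; first (rewrite /A; ring).
    * apply: kle; lr.
    * apply: klt; lr.
    * apply: kle; lr.
  + have eW : W c = B.
      have := w2; rewrite Fr; last lr.
      move=> e; rewrite /B -[in RHS]e; field; lr.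
    have -> : [set s | Gx c (p1 + s / k)] = [set` `[k * (A - p1), k * (U c - p1)]].
      apply/seteqP; split => s /=; rewrite !in_itv /= -!pre_le -!pre_ge.
      * move=> /(Gx_bc hcm c1) [h0 [h1 [h2 [h3|h3]]]]; first lr.
        exfalso; move: h0 => /andP[_ h0]; lr.
      * move=> /andP[h1 h2]; apply/(Gx_bc hcm c1).
        split; first lr. split => //. split; first lr. by left.
    rewrite meas1; last by apply: kle; lr.
    rewrite eW /A; ring.
Qed.

Lemma line_ex p1 : (exists s, gr f (pt_line (p1, - p1) (v_alpha al) s)) <->
  0 <= - (1 + al) * p1 <= (1 + al) * a.
Proof.
set c := - (1 + al) * p1.
split.
- move=> [s]; rewrite pt_eq -/c => /gr_line H.
  apply/andP; split; rewrite leNgt; apply/negP => h.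
  + exact: (@Gx_none c _ (or_introl h) H).
  + exact: (@Gx_none c _ (or_intror h) H).
- move=> /andP[c0 c1]; exists 0; rewrite pt_eq -/c; apply/gr_line.
  rewrite mul0r addr0.
  have hp : (1 + al) * p1 <= 0 by rewrite /c in c0; lr.
  have hp1 : p1 <= 0 by move: hp; rewrite pmulr_rle0 //; lr.
  have hp2 : 0 <= (1 + al) * (p1 + a) by rewrite /c in c1; lr.
  have hp3 : 0 <= p1 + a by move: hp2; rewrite pmulr_rge0 //; lr.
  have ey : al * p1 + c = - p1 by rewrite /c; ring.
  rewrite /Gx ey ler0_norm //; split; first lr.
  split; first exact: lexx.
  have := f_ge_abs p1; rewrite ler0_norm //.
Qed.

Lemma LHS_iff x y : let c := y - al * x in
  Sh_set al (gr f) (x, y) <->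
  (0 <= c <= (1 + al) * a /\ - ((1 + al)^-1 * c) <= x <= E c).
Proof.
move=> c; have kp := kpos; have kn : k != 0 by rewrite gt_eqF.
split.
- move=> [[p1 p2] /= Dp]; rewrite /D_line /= in Dp; rewrite Dp.
  rewrite /Kp; case: asboolP => H; last by [].
  move=> [s /andP[s0 sL]]; rewrite pt_eq => -[ex ey].
  have Hc := (line_ex p1).1 H.
  have ec : c = - (1 + al) * p1 by rewrite /c ey ex; ring.
  rewrite lm // -ec in sL.
  have ep : p1 = - ((1 + al)^-1 * c) by rewrite ec; field; lr.
  rewrite -ec in Hc; split => //.
  rewrite ex -ep; apply/andP; split.
  + by rewrite pre_le subrr mulr0.
  + by rewrite pre_ge; move: sL; rewrite ep opprK.
- move=> [Hc /andP[h1 h2]].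
  set p1 := - ((1 + al)^-1 * c).
  have ec : - (1 + al) * p1 = c by rewrite /p1; field; lr.
  exists (p1, - p1); first by rewrite /D_line.
  rewrite /Kp; case: asboolP => H; last by apply: H; apply/line_ex; rewrite ec.
  exists (k * (x - p1)).
    apply/andP; split.
    + by apply: mulr_ge0; [exact: ltW kp | rewrite subr_ge0; exact: h1].
    + rewrite lm; last by rewrite ec.
      rewrite ec; apply: kle; rewrite /p1; lr.
  rewrite pt_eq ec.
  have -> : p1 + k * (x - p1) / k = x by field.
  by rewrite /c; congr (_, _); ring.
Qed.

Lemma final_eq : Sh_set al (gr f) = gr Sh.
Proof.
apply/seteqP; split => -[x y] H.
- by apply/grShE/main_equiv/LHS_iff.
- by apply/LHS_iff/main_equiv/grShE.
Qed.

End S.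

Theorem theorem4p7 (R : realType) (a alpha : R) (f : R -> R) :
  0 < a -> 0 <= alpha < 1 -> in_Ca a f ->
  Sh_set alpha (gr f) = gr (Sh_fun a alpha f).
Proof.
move=> a0 /andP[al0 al1] [fd [fdc [fev [fout fcvx]]]].
by apply: final_eq.
Qed.
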